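(* Assume $\operatorname{non}(\mathcal N)=\mathfrak c$. Then $\mathcal{NM}_{\mathfrak c}$, $\mathcal{NF}_{\mathfrak c}$ and $\mathcal{ND}_{\mathfrak c}$ are positively $2^{\mathfrak c}$-coneable in $\left(\mathbb R^{[0,1]}\right)^{\mathfrak c}$.
   Context: For a regular infinite cardinal $\kappa$ (viewed as the directed set of ordinals $<\kappa$ with the usual order), a $\kappa$-sequence $(x_\alpha)_{\alpha<\kappa}$ in a topological space converges to $x$ if for every neighbourhood $U$ of $x$ there is $\alpha_0<\kappa$ with $x_\alpha\in U$ for all $\alpha_0<\alpha<\kappa$; $\left(\mathbb R^{[0,1]}\right)^{\kappa}$ is the real vector space/algebra of $\kappa$-sequences of functions $[0,1]\to\mathbb R$ with indexwise operations. $\lambda$ is Lebesgue measure, $\mathcal N$ the null subsets of $[0,1]$, $\operatorname{non}(\mathcal N)$ the least cardinality of a non-null subset of $[0,1]$, $\mathfrak c=2^{\aleph_0}$. For bounded $\kappa$-sequences of reals, $\liminf$ is the infimum of the set of cluster points. $\mathcal{NM}_{\kappa}$: $\kappa$-sequences of Lebesgue measurable $f_\alpha:[0,1]\to\mathbb R$ with $0\le f_\alpha\le f_\beta$ a.e. whenever $\alpha\le\beta$, converging pointwise a.e. to an integrable $f$, and with $\int f_\alpha\,d\lambda$ not converging to $\int f\,d\lambda$. $\mathcal{NF}_{\kappa}$: $\kappa$-sequences of Lebesgue measurable $f_\alpha\ge0$ a.e. on $[0,1]$ with $x\mapsto\liminf_\alpha f_\alpha(x)$ integrable and $\int\liminf_\alpha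 f_\alpha\,d\lambda>\liminf_\alpha\int f_\alpha\,d\lambda$. $\mathcal{ND}_{\kappa}$: $\kappa$-sequences of Lebesgue measurable $f_\alpha:[0,1]\to\mathbb R$ with some integrable $g$ such that $|f_\alpha|\le g$ a.e. for all $\alpha$, $f_\alpha\to f$ a.e. for some integrable $f$, and $\int|f_\alpha-f|\,d\lambda\not\to0$. $S$ is positively $\mu$-coneable if there is a linearly independent $B\subset S$ with $\operatorname{card}(B)=\mu$ such that every combination $\sum a_ix_i$, $a_i>0$, $x_i\in B$ (finite) lies in $S$. *)

(* Defs.v *)
From HB Require Import structures.
From mathcomp Require Import all_boot all_order all_algebra.
From mathcomp Require Import all_classical all_reals all_analysis.
Set Implicit Arguments. Unset Strict Implicit. Unset Printing Implicit Defensive.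
Import Order.TTheory GRing.Theory Num.Theory.
Import numFieldTopology.Exports numFieldNormedType.Exports.
Local Open Scope classical_set_scope.
Local Open Scope ring_scope.

Section kappa_sequences.
Context (d : Order.disp_t) (I : orderType d).

Definition wellordered : Prop :=
  forall A : set I, A !=set0 -> exists i, A i /\ forall j, A j -> (i <= j)%O.

(* (I, <) has the order type of the initial ordinal of 2^aleph_0 = card R,
   i.e. I "is" the directed set of ordinals < c. *)
Definition is_initial_ordinal_of_c (R : realType) : Prop :=
  [/\ wellordered,
      ([set: I] #= [set: R])%card &
      forall i : I, ~ ([set: R] #<= [set j | (j < i)%O])%card].

Definition kconv {T : topologicalType} (x : I -> T) (l : T) : Prop :=
  forall U, nbhs l U -> exists a0, forall a, (a0 < a)%O -> U (x a).

Definition kcluster {T : topologicalType} (x : I -> T) (y : T) : Prop :=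
  forall U, nbhs y U -> forall a0, exists a, (a0 < a)%O /\ U (x a).

Definition kliminf {R : realType} (x : I -> \bar R) : \bar R :=
  ereal_inf [set y | kcluster x y].
End kappa_sequences.

Section lebesgue.
Context (R : realType).

(* carrier of the completed Lebesgue measure (the Lebesgue measurable sets);
   as a type it is R *)
Definition LT := caratheodory_type (R:=R)
  (T:=lebesgue_stieltjes_measure_ocitv_type__canonical__measurable_structure_SemiRingOfSets R)
  (wlength idfun)^*%mu.
Definition lam : set LT -> \bar R := @completed_lebesgue_measure R.
Definition D01 : set LT := `[0%R, 1%R].

Definition nonN_eq_c : Prop :=
  forall A : set LT, A `<=` D01 -> ~ ([set: R] #<= A)%card -> lam.-negligible A.

Context (d : Order.disp_t) (I : orderType d).

Local Open Scope ereal_scope.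

Definition NM : set (I -> LT -> R) := fun f =>
  [/\ forall a, measurable_fun D01 (f a),
      forall a b, (a <= b)%O ->
        {ae lam, forall x, D01 x -> (0 <= f a x <= f b x)%R} &
      exists g : LT -> R,
        [/\ lam.-integrable D01 (EFin \o g),
            {ae lam, forall x, D01 x -> kconv (fun a => f a x) (g x)} &
            ~ kconv (fun a => \int[lam]_(x in D01) (f a x)%:E)
                    (\int[lam]_(x in D01) (g x)%:E)]].

Definition NF : set (I -> LT -> R) := fun f =>
  [/\ forall a, measurable_fun D01 (f a),
      forall a, {ae lam, forall x, D01 x -> (0 <= f a x)%R},
      lam.-integrable D01 (fun x => kliminf (fun a => (f a x)%:E)) &
      kliminf (fun a => \int[lam]_(x in D01) (f a x)%:E)
        < \int[lam]_(x in D01) kliminf (fun a => (f a x)%:E)].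

Definition ND : set (I -> LT -> R) := fun f =>
  [/\ forall a, measurable_fun D01 (f a),
      exists g : LT -> R, lam.-integrable D01 (EFin \o g) /\
        forall a, {ae lam, forall x, D01 x -> (`|f a x| <= g x)%R} &
      exists h : LT -> R,
        [/\ lam.-integrable D01 (EFin \o h),
            {ae lam, forall x, D01 x -> kconv (fun a => f a x) (h x)} &
            ~ kconv (fun a => \int[lam]_(x in D01) (`|f a x - h x|)%:E) 0]].

Local Close Scope ereal_scope.

(* linear independence in (R^[0,1])^I : elements are compared through their
   values on [0,1] *)
Definition lin_indep (B : set (I -> LT -> R)) : Prop :=
  forall (n : nat) (v : 'I_n -> I -> LT -> R) (c : 'I_n -> R),
    (forall i, B (v i)) -> injective v ->
    (forall a x, D01 x -> \sum_(i < n) c i * v i a x = 0) ->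
    forall i, c i = 0.

Definition pos_coneable_2c (S : set (I -> LT -> R)) : Prop :=
  exists B : set (I -> LT -> R),
    [/\ (B #= [set: set R])%card, lin_indep B &
        forall (n : nat) (v : 'I_n.+1 -> I -> LT -> R) (c : 'I_n.+1 -> R),
          (forall i, B (v i)) -> (forall i, 0 < c i) ->
          S (fun a x => \sum_(i < n.+1) c i * v i a x)].
End lebesgue.

(* Main.v *)
Require Import Defs.
From HB Require Import structures.
From mathcomp Require Import all_boot all_order all_algebra.
From mathcomp Require Import all_classical all_reals all_analysis.
From mathcomp Require Import measurable_realfun.
From mathcomp Require Import ring lra.
Import Order.TTheory GRing.Theory Num.Theory.
Import numFieldTopology.Exports numFieldNormedType.Exports.
Local Open Scope classical_set_scope.
Local Open Scope ring_scope.

Section Meas.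
Variable R : realType.
Local Notation T := (LT R).
Local Notation mu := (@lam R).
Local Notation D := (@D01 R).

Lemma lamD : mu D = 1%E.
Proof. transitivity (@lebesgue_measure R `[0%R,1%R]%classic); first by [].
rewrite lebesgue_measure_itv /= lte01 oppr0 adde0 //. Qed.
Lemma mD : measurable D.
Proof. apply: sub_caratheodory. exact: measurable_itv. Qed.
Lemma negl0 : mu.-negligible [set (0 : T)].
Proof.
apply/negligibleP; first by apply: sub_caratheodory; exact: measurable_set1.
exact: lebesgue_measure_set1.
Qed.
Lemma cmpl {A : set T} : mu.-negligible A -> measurable A.
Proof. exact: completed_lebesgue_measure_is_complete. Qed.

Lemma ae_of (P : T -> Prop) M : mu.-negligible M ->
  (forall x, ~ M x -> P x) -> {ae mu, forall x, P x}.
Proof.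
move=> nM HP; apply: (negligibleS _ nM) => x /= nPx.
by apply: contrapT => Mx; apply: nPx; exact: HP.
Qed.

Lemma L1e (f : T -> \bar R) (k : \bar R)
  (M : set T) : mu.-negligible M -> (forall x, D x -> ~ M x -> f x = k) ->
  measurable_fun D f.
Proof.
move=> nM fk _ Y mY.
have mM := cmpl nM.
have [Yk|Yk] := pselect (Y k).
- have -> : D `&` f @^-1` Y = (D `\` M) `|` (D `&` M `&` f @^-1` Y).
    apply/seteqP; split => x /=.
    + move=> [Dx Yx]; have [Mx|Mx] := pselect (M x); first by right.
      by left.
    + by move=> [[Dx Mx]|[[Dx _] Yx]] //; split => //; rewrite fk.
  apply: measurableU; first exact: measurableD mD mM.
  apply: cmpl; apply: (negligibleS _ nM) => x [[_ ?] _] //.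
- apply: cmpl; apply: (negligibleS _ nM) => x [Dx Yx].
  by apply: contrapT => Mx; apply: Yk; rewrite -(fk x Dx Mx).
Qed.

Lemma L1r (f : T -> R) (k : R)
  (M : set T) : mu.-negligible M -> (forall x, D x -> ~ M x -> f x = k) ->
  measurable_fun D f.
Proof.
move=> nM fk _ Y mY.
have mM := cmpl nM.
have [Yk|Yk] := pselect (Y k).
- have -> : D `&` f @^-1` Y = (D `\` M) `|` (D `&` M `&` f @^-1` Y).
    apply/seteqP; split => x /=.
    + move=> [Dx Yx]; have [Mx|Mx] := pselect (M x); first by right.
      by left.
    + by move=> [[Dx Mx]|[[Dx _] Yx]] //; split => //; rewrite fk.
  apply: measurableU; first exact: measurableD mD mM.
  apply: cmpl; apply: (negligibleS _ nM) => x [[_ ?] _] //.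
- apply: cmpl; apply: (negligibleS _ nM) => x [Dx Yx].
  by apply: contrapT => Mx; apply: Yk; rewrite -(fk x Dx Mx).
Qed.

Lemma int_ae (f : T -> \bar R) (k : R) (M : set T) : mu.-negligible M ->
  (forall x, D x -> ~ M x -> f x = k%:E) ->
  (\int[mu]_(x in D) f x = k%:E)%E.
Proof.
move=> nM fk.
rewrite (ae_eq_integral (cst k%:E)).
- rewrite integral_cst; last exact: mD.
  by rewrite -[X in (_ * X)%E]/(mu D) lamD mule1.
- exact: mD.
- exact: (L1e _ _ _ nM fk).
- exact: measurable_cst.
- have := ae_of (fun x => D x -> f x = cst k%:E x) M nM. apply. by move=> x Mx Dx; rewrite fk.
Qed.

Lemma int_cst (k : R) : (\int[mu]_(x in D) k%:E = k%:E)%E.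
Proof. by apply: (@int_ae (fun _ => k%:E) k set0) => //; exact: negligible_set0. Qed.

Lemma integrable_ae (f : T -> \bar R) (k : R) (M : set T) : mu.-negligible M ->
  (forall x, D x -> ~ M x -> f x = k%:E) -> mu.-integrable D f.
Proof.
move=> nM fk; apply/integrableP; split; first exact: (L1e _ _ _ nM fk).
rewrite (@int_ae _ `|k| M nM); first exact: ltry.
by move=> x Dx Mx; rewrite fk.
Qed.
End Meas.

Section Gen.
Variables (R : realType) (dd : Order.disp_t) (I : orderType dd).
Hypothesis unb : forall a0 : I, exists a, (a0 < a)%O.

Lemma kconv_ev {T : topologicalType} (x : I -> T) l a0 :
  (forall a, (a0 < a)%O -> x a = l) -> kconv x l.
Proof. by move=> H U Ul; exists a0 => a /H ->; exact: nbhs_singleton. Qed.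

Lemma not_kconv {T : topologicalType} (hT : hausdorff_space T) (x : I -> T) k l :
  (forall a, x a = k) -> k <> l -> ~ kconv x l.
Proof.
move=> xk kl H; apply: kl; apply: hT => A B Al Bk.
have [a0 Ha0] := H B Bk; have [a a0a] := unb a0.
exists k; split; first exact: nbhs_singleton.
by rewrite -(xk a); exact: Ha0.
Qed.

Lemma kliminf_ev (x : I -> \bar R) k a0 :
  (forall a, (a0 < a)%O -> x a = k) -> kliminf x = k.
Proof.
move=> H; rewrite /kliminf.
suff -> : [set y | kcluster x y] = [set k] by rewrite ereal_inf1.
apply/seteqP; split => y /=.
- move=> cy; apply/esym; apply: (@ereal_hausdorff R) => A B Ak By.
  have [a [a0a Axa]] := cy B By a0.
  exists k; split; first exact: nbhs_singleton.
  by rewrite -(H a a0a).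
- move=> -> U Uk a1; have [a Ha] := unb (Order.max a0 a1).
  move: Ha; rewrite gt_max => /andP[h1 h2].
  by exists a; split => //; rewrite H //; exact: nbhs_singleton.
Qed.
End Gen.

Section Seq.
Variables (R : realType) (dd : Order.disp_t) (I : orderType dd).
Local Notation T := (LT R).
Local Notation mu := (@lam R).
Local Notation D := (@D01 R).
Hypothesis unb : forall a0 : I, exists a, (a0 < a)%O.
Variable e : T -> I.
Let Na (a : I) := [set x : T | D x /\ (e x < a)%O].
Hypothesis hN : forall a, mu.-negligible (Na a).
Let h (a : I) (x : T) : R := ((e x < a)%O)%:R.
Variables (S : I -> T -> R) (C : R).
Hypothesis C0 : 0 < C.
Hypothesis SE : forall a x, x != 0 -> S a x = C * h a x.

Let M a := Na a `|` [set 0].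
Let nM a : mu.-negligible (M a).
Proof. by apply: negligibleU; [exact: hN|exact: negl0]. Qed.

Let S0 a x : D x -> ~ M a x -> S a x = 0.
Proof.
move=> Dx Mx; have x0 : x != 0 by apply/eqP => x0; apply: Mx; right.
rewrite (SE a x x0) /h; case: (boolP (e x < a)%O) => ex; last by rewrite mulr0.
by exfalso; apply: Mx; left.
Qed.

Let S_mes a : measurable_fun D (S a).
Proof. exact: (@L1r R (S a) 0 (M a) (nM a) (@S0 a)). Qed.

Let S_int a : (\int[mu]_(x in D) (S a x)%:E = 0%:E)%E.
Proof. by apply: (@int_ae R _ _ _ (nM a)) => x Dx Mx; rewrite S0. Qed.

Let S_ev x : x != 0 -> forall a, (e x < a)%O -> S a x = C.
Proof. by move=> x0 a ea; rewrite SE // /h ea mulr1. Qed.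

Let S_conv : {ae mu, forall x, D x -> kconv (fun a => S a x) C}.
Proof.
have := @ae_of R (fun x => D x -> kconv (fun a => S a x) C) _ (@negl0 R); apply.
move=> x x0 Dx; apply: (@kconv_ev _ _ _ _ _ (e x)) => a; apply: S_ev.
by apply/eqP.
Qed.

Lemma S_NM : NM S.
Proof.
split.
- exact: S_mes.
- move=> a b ab.
  have := @ae_of R (fun x => D x -> (0 <= S a x <= S b x)%R) _ (@negl0 R); apply.
  move=> x /eqP x0 Dx; rewrite !SE // /h.
  case: (boolP (e x < a)%O) => ea.
  + by rewrite (lt_le_trans ea ab) mulr1n mulr1 lexx andbT ltW.
  + by rewrite mulr0n mulr0 lexx /=; case: (e x < b)%O; rewrite ?mulr1 ?mulr0n ?mulr0 // ltW.
- exists (fun _ => C); split.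
  + exact: (@integrable_ae R _ C _ (negligible_set0 _)).
  + exact: S_conv.
  + rewrite (@int_cst R); under eq_fun do rewrite S_int.
    apply: (@not_kconv _ _ unb _ (@ereal_hausdorff R) _ 0%:E) => //.
    by move=> [] /eqP; rewrite eq_sym gt_eqF.
Qed.

Let liminfS x : x != 0 -> kliminf (fun a => (S a x)%:E) = C%:E.
Proof.
move=> x0; apply: (@kliminf_ev R _ _ unb _ _ (e x)) => a ea.
by rewrite S_ev.
Qed.

Lemma S_NF : NF S.
Proof.
split.
- exact: S_mes.
- move=> a.
  have := @ae_of R (fun x => D x -> (0 <= S a x)%R) _ (@negl0 R); apply.
  move=> x /eqP x0 Dx; rewrite SE // /h.
  by case: (e x < a)%O; rewrite ?mulr1n ?mulr0n ?mulr1 ?mulr0 // ltW.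
- apply: (@integrable_ae R _ C _ (@negl0 R)) => x Dx /eqP x0.
  exact: liminfS.
- rewrite (@int_ae R _ C _ (@negl0 R)); last first.
    by move=> x Dx /eqP x0; exact: liminfS.
  under eq_fun do rewrite S_int.
  rewrite (@kliminf_ev R _ _ unb _ 0%:E (e 0)) //.
Qed.

Lemma S_ND : ND S.
Proof.
split.
- exact: S_mes.
- exists (fun _ => C); split.
  + exact: (@integrable_ae R _ C _ (negligible_set0 _)).
  + move=> a.
    have := @ae_of R (fun x => D x -> (`|S a x| <= C)%R) _ (@negl0 R); apply.
    move=> x /eqP x0 Dx; rewrite SE // /h.
    case: (e x < a)%O; rewrite ?mulr1n ?mulr0n ?mulr1 ?mulr0 ?normr0 ?gtr0_norm //.
    exact: ltW.
- exists (fun _ => C); split.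
  + exact: (@integrable_ae R _ C _ (negligible_set0 _)).
  + exact: S_conv.
  + have Hi a : (\int[mu]_(x in D) (`|S a x - C|)%:E = C%:E)%E.
      apply: (@int_ae R _ _ _ (nM a)) => x Dx Mx.
      by rewrite S0 // sub0r normrN gtr0_norm.
    under eq_fun do rewrite Hi.
    apply: (@not_kconv _ _ unb _ (@ereal_hausdorff R) _ C%:E) => //.
    by move=> [] /eqP; rewrite gt_eqF.
Qed.
End Seq.

Section Tern.
Variable R : realType.
Let p (k : nat) : R := (3^-1) ^+ k.
Let p_ge0 k : 0 <= p k.
Proof. by rewrite /p exprn_ge0 // invr_ge0. Qed.
Let pS k : p k.+1 = p k / 3.
Proof. by rewrite /p exprSr. Qed.
Definition Sb (b : nat -> bool) (n : nat) : R := \sum_(k < n) (b k)%:R * (2 * p k.+1).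
Let SbS b n : Sb b n.+1 = Sb b n + (b n)%:R * (2 * p n.+1).
Proof. by rewrite /Sb big_ord_recr. Qed.
Let bnd (b : bool) : (0 : R) <= (b%:R : R) <= (1 : R).
Proof. by case: b; rewrite ?lexx ?ler01. Qed.
Let tail b n m : (n <= m)%N -> Sb b m <= Sb b n + p n - p m.
Proof.
elim: m => [|m IH]; first by rewrite leqn0 => /eqP ->; lra.
rewrite leq_eqVlt => /orP[/eqP <-|]; first by lra.
rewrite ltnS => /IH H; rewrite SbS pS.
move: (bnd (b m)) => /andP[b0 b1]; have := p_ge0 m; nra.
Qed.
Let mono b n m : (n <= m)%N -> Sb b n <= Sb b m.
Proof.
elim: m => [|m IH]; first by rewrite leqn0 => /eqP ->.
rewrite leq_eqVlt => /orP[/eqP <-|]; first by [].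
rewrite ltnS => /IH H; rewrite SbS.
move: (bnd (b m)) => /andP[b0 b1]; have := p_ge0 m.+1; nra.
Qed.
Definition tern (b : nat -> bool) : R := sup (range (Sb b)).
Let hs b : has_sup (range (Sb b)).
Proof.
split; first by exists (Sb b 0), 0%N.
exists 1 => _ [m _ <-]; have := tail b 0 m (leq0n m).
have := p_ge0 m; rewrite /Sb big_ord0 /p expr0; lra.
Qed.
Let ge_tern b n : Sb b n <= tern b.
Proof. by apply: sup_upper_bound (hs b) _ _; exists n. Qed.
Let le_tern b n : tern b <= Sb b n + p n.
Proof.
apply: ge_sup; first by exists (Sb b 0), 0%N.
move=> _ [m _ <-]; have [nm|mn] := leqP n m.
- have := tail b n m nm; have := p_ge0 m; lra.
- have := mono b m n (ltnW mn); have := p_ge0 n; lra.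
Qed.
Lemma tern_inj : injective tern.
Proof.
suff H : forall b b' m, (forall k, (k < m)%N -> b k = b' k) -> b m = true -> b' m = false ->
  tern b' < tern b.
  move=> b b' E; apply: contrapT => bb'.
  have [m Hm] : exists m, b m != b' m.
    apply: contrapT => nex; apply: bb'; apply: funext => k.
    by apply/eqP; apply: contrapT => ne; apply: nex; exists k; exact/negP.
  pose m0 := @ex_minn (fun k => b k != b' k) (ex_intro _ m Hm).
  have : b m0 != b' m0 by rewrite /m0; case: ex_minnP.
  have bef : forall k, (k < m0)%N -> b k = b' k.
    move=> k; rewrite /m0; case: ex_minnP => m1 _ Hmin km1.
    by apply/eqP; apply: contraTT km1 => ne; rewrite -leqNgt; exact: Hmin.
  case Eb : (b m0); case Eb' : (b' m0) => // _.
  + by have := H b b' m0 bef Eb Eb'; rewrite E ltxx.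
  + have := H b' b m0 (fun k hk => esym (bef k hk)) Eb' Eb; rewrite E ltxx //.
move=> b b' m bef bm b'm.
have eqS : Sb b m = Sb b' m.
  rewrite /Sb; apply: eq_bigr => k _; by rewrite bef.
have h1 := ge_tern b m.+1; have h2 := le_tern b' m.+1.
rewrite !SbS bm b'm eqS /= in h1 h2.
have : 0 < p m by rewrite /p exprn_gt0 // invr_gt0. rewrite pS in h1 h2 *; lra.
Qed.
End Tern.

Section Enc.
Variable R : realType.
Definition qc (x : R) (n : nat) : bool :=
  if @unpickle rat n is Some r then x < ratr r else false.
Lemma qc_inj : injective qc.
Proof.
suff H : forall x y : R, x < y -> qc x <> qc y.
  move=> x y E; have [xy|yx|//] := ltgtP x y.
  - by exfalso; exact: H xy E.
  - by exfalso; exact: H yx (esym E).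
move=> x y xy E.
have [r] := rat_in_itvoo xy; rewrite in_itv /= => /andP[xr ry].
have := congr1 (fun f => f (pickle r)) E; rewrite /qc pickleK xr.
by move=> /esym; rewrite ltNge (ltW ry).
Qed.

Definition enc (l : seq (R * bool)%type) (m : nat) : bool :=
  match @unpickle (nat * nat)%type m with
  | Some (k, j) =>
      if k is k'.+1 then
        let pr := nth (0, false) l k' in
        if j is j'.+1 then qc pr.1 j' else pr.2
      else j == size l
  | None => false
  end.
Lemma enc_inj : injective enc.
Proof.
move=> l l' E.
have ev (k j : nat) : enc l (pickle (k, j)) = enc l' (pickle (k, j)) by rewrite E.
have sz : size l = size l'.
  have := ev 0%N (size l); rewrite /enc !pickleK eqxx => /esym.
  by move/eqP.
apply: (eq_from_nth (x0 := (0, false))) => // i _.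
have e2 := ev i.+1 0%N; rewrite /enc !pickleK /= in e2.
have e1 : qc (nth (0, false) l i).1 = qc (nth (0, false) l' i).1.
  apply: funext => j; have := ev i.+1 j.+1; by rewrite /enc !pickleK.
move/qc_inj: e1.
by case: (nth _ l i) e2 => a b; case: (nth _ l' i) => a' b' /= -> ->.
Qed.
End Enc.

Lemma card_le_injT T U : ([set: T] #<= [set: U])%card -> exists f : T -> U, injective f.
Proof.
move=> /card_leP[g].
exists (fun x => sval (g (@SigSub _ _ _ x (mem_set I)))).
move=> x y /= H.
have H2 := val_inj H.
have := @inj _ _ _ g _ _ (mem_set I) (mem_set I) H2.
by move=> [].
Qed.

Lemma inj_le T U (f : T -> U) (A : set T) (B : set U) :
  {in A &, injective f} -> f @` A `<=` B -> (A #<= B)%card.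
Proof.
move=> fi fAB; apply: (card_le_trans _ (subset_card_le fAB)).
by have := inj_card_eq fi; rewrite card_eq_sym card_eq_le => /andP[].
Qed.

Lemma asbool_eqE (P Q : Prop) : `[< P >] = `[< Q >] -> (P <-> Q).
Proof. by move=> E; split => H; apply/asboolP; [rewrite -E|rewrite E]; apply/asboolP. Qed.

Theorem mainTheorem7 (R : realType) (d : Order.disp_t) (I : orderType d) :
  @is_initial_ordinal_of_c d I R -> @nonN_eq_c R ->
  [/\ @pos_coneable_2c R d I (@NM R d I), @pos_coneable_2c R d I (@NF R d I) &
      @pos_coneable_2c R d I (@ND R d I)].
Proof.
move=> [wo cardI segI] hN0.
have [j jinj] : exists j : R -> I, injective j.
  apply: card_le_injT.
  by move: cardI; rewrite card_eq_sym card_eq_le => /andP[].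
have unb : forall a0 : I, exists a, (a0 < a)%O.
  move=> a0; apply: contrapT => nex.
  have le_a0 : forall b, (b <= a0)%O.
    by move=> b; rewrite leNgt; apply/negP => ab; apply: nex; exists b.
  apply: (segI a0).
  have [g [ginj glt]] : exists g : R -> I, injective g /\ forall x, (g x < a0)%O.
    have [[r0 jr0]|nr] := pselect (exists r, j r = a0).
    - exists (fun x => j (if x < r0 then x else x + 1)); split.
      + move=> x y /jinj.
        by case: (ltP x r0) => hx; case: (ltP y r0) => hy; lra.
      + move=> x; rewrite lt_neqAle le_a0 andbT; apply/eqP.
        rewrite -jr0 => /jinj.
        by case: (ltP x r0) => hx; lra.
    - exists j; split => // x; rewrite lt_neqAle le_a0 andbT; apply/eqP => H.
      by apply: nr; exists x.
  apply: (@inj_le _ _ g); first by move=> x y _ _ /ginj.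
  by move=> _ [x _ <-]; exact: glt.
pose e : LT R -> I := fun x => j x.
have hN : forall a, (@lam R).-negligible [set x : LT R | D01 x /\ (e x < a)%O].
  move=> a; apply: hN0; first by move=> x [].
  move=> Hle; apply: (segI a).
  apply: (card_le_trans Hle); apply: (@inj_le _ _ e).
  - by move=> x y _ _ /jinj.
  - by move=> _ [x [_ ex] <-].
pose iota := fun l : seq (R * bool)%type => j (@tern R (@enc R l)).
have iinj : injective iota.
  by move=> l l' /jinj /(@tern_inj R) /(@enc_inj R).
pose dec (a : I) := xget [::] [set l | iota l = a].
have decK l : dec (iota l) = l.
  apply: iinj; rewrite /dec.
  by have := @xgetPex _ [::] [set l' | iota l' = iota l] (ex_intro _ l erefl).
pose psi (A : set R) (l : seq (R * bool)%type) : R :=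
  (all (fun p => `[< A p.1 >] == p.2) l)%:R.
pose F (A : set R) : I -> LT R -> R := fun a x =>
  if x == 0 :> R then psi A (dec a) else ((e x < a)%O)%:R.
have F0 A l : F A (iota l) 0 = psi A l by rewrite /F eqxx decK.
have Finj : injective F.
  move=> A A' E; apply: contrapT => AA'.
  have [r Hr] : exists r, ~ (A r <-> A' r).
    apply: contrapT => nex; apply: AA'; apply/funext => r.
    by apply/propext; apply: contrapT => H; apply: nex; exists r.
  have := congr1 (fun G => G (iota [:: (r, `[< A r >])]) 0) E.
  rewrite /= !F0 /psi /= !andbT eqxx.
  case: eqP => [Ee|_]; last by move=> /eqP; rewrite eqr_nat.
  move=> _; apply: Hr; have := @asbool_eqE (A' r) (A r) Ee; by case.
have D0 : D01 (0 : LT R) by rewrite /D01 /= in_itv /= lexx ler01.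
have cone : forall P : set (I -> LT R -> R),
    (forall (S : I -> LT R -> R) (C : R), 0 < C ->
       (forall a (x : R), x != 0 -> S a x = C * ((e x < a)%O)%:R) -> P S) ->
    pos_coneable_2c P.
  move=> P HP; exists (range F); split.
  - exact: (inj_card_eq (in2W Finj)).
  - move=> n v c Bv vinj hs i.
    have /choice [A HA] : forall k, exists A, F A = v k.
      by move=> k; have [A _ HA] := Bv k; exists A.
    have Ainj : injective A.
      by move=> k k' E; apply: vinj; rewrite -!HA E.
    have sep : forall k, exists r, k != i -> ~ (A k r <-> A i r).
      move=> k; have [ki|ki] := eqVneq k i; first by exists 0.
      have Aki : A k <> A i by move=> /Ainj /eqP; rewrite (negbTE ki).
      apply: contrapT => nex; apply: Aki; apply/funext => r.
      apply/propext; apply: contrapT => H; apply: nex; exists r => _; exact: H.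
    have /choice [r Hr] := sep.
    pose l := [seq (r k, `[< A i (r k) >]) | k <- enum 'I_n].
    have allE k : all (fun p : R * bool => `[< A k p.1 >] == p.2) l = (k == i).
      have [->|ki] := eqVneq k i.
        by apply/allP => p /mapP [k' _ ->] /=.
      apply/negP => /allP H.
      have := H (r k, `[< A i (r k) >]) (map_f _ (mem_enum _ k)) => /=.
      move=> /eqP Ee; apply: (Hr k ki); exact: asbool_eqE Ee.
    have psiE k : psi (A k) l = (k == i)%:R by rewrite /psi allE.
    have := hs (iota l) 0 D0.
    under eq_bigr do rewrite -HA F0 psiE.
    rewrite (bigD1 i) //= eqxx mulr1 big1 ?addr0 //.
    by move=> k /negbTE ->; rewrite mulr0.
  - move=> n v c Bv cpos.
    have /choice [A HA] : forall k, exists A, F A = v k.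
      by move=> k; have [A _ HA] := Bv k; exists A.
    apply: (HP _ (\sum_(i < n.+1) c i)).
      rewrite big_ord_recl; have := cpos ord0.
      have : 0 <= \sum_(i < n) c (lift ord0 i) by apply: sumr_ge0 => k _; exact: ltW.
      lra.
    move=> a x x0; rewrite mulr_suml; apply: eq_bigr => k _.
    by rewrite -HA /F (negbTE x0).
split; apply: cone => S C C0 SE.
- exact: (@S_NM R d I unb e hN S C C0 SE).
- exact: (@S_NF R d I unb e hN S C C0 SE).
- exact: (@S_ND R d I unb e hN S C C0 SE).
Qed.
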